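(* Let $n>2$ be odd and let $\mathbf{A}_n$ be the algebra defined below. For every $(n-1)$-element subset $E$ of $A_n$ there is a term operation $t$ of $\mathbf{A}_n$ satisfying $t(y,x,x)=t(x,y,x)=t(x,x,y)=y$ for all $x,y\in E$.
   Context: Let $[n]=\{1,\dots,n\}$ and let $m$ be the minority operation on $[n]$ given by $m(x,y,z)=x$ if $y=z$, $m(x,y,z)=y$ if $x=z$, and $m(x,y,z)=z$ otherwise. On $\{0,1,2,3\}$, $+,-$ denote arithmetic modulo 4 and $\oplus$ denotes bitwise XOR of 2-bit binary representations. Let $A_n=[n]\times\{0,1,2,3\}$. For $i\in[n]$ define the ternary operation $t_i$ on $A_n$ by $t_i((a_1,b_1),(a_2,b_2),(a_3,b_3))=(i,\,b_1-b_2+b_3)$ if $a_1=a_2=a_3=i$, and $=(m(a_1,a_2,a_3),\,b_1\oplus b_2\oplus b_3)$ otherwise. The algebra $\mathbf{A}_n$ has universe $A_n$ and basic operations $t_1,\dots,t_n$. *)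

(* Defs.v *)
From mathcomp Require Import all_boot all_algebra.
Set Implicit Arguments. Unset Strict Implicit. Unset Printing Implicit Defensive.

(* [n] = {1,...,n} is represented by 'I_n = {0,...,n-1} (relabeling i |-> i-1).
   {0,1,2,3} is 'I_4. *)
Definition carrier (n : nat) : finType := ('I_n * 'I_4)%type.

Definition minority (n : nat) (x y z : 'I_n) : 'I_n :=
  if y == z then x else if x == z then y else z.

Definition affine4 (a b c : 'I_4) : 'I_4 := inZp (a + (4 - b) + c).

Definition xor4_nat (a b : nat) : nat :=
  ((odd a) (+) (odd b)) + 2 * ((odd a./2) (+) (odd b./2)).
Definition xor4 (a b : 'I_4) : 'I_4 := inZp (xor4_nat a b).

Definition top (n : nat) (i : 'I_n) (u v w : carrier n) : carrier n :=
  if [&& u.1 == i, v.1 == i & w.1 == i]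
  then (i, affine4 u.2 v.2 w.2)
  else (minority u.1 v.1 w.1, xor4 (xor4 u.2 v.2) w.2).

Inductive term3 (n : nat) : Type :=
| Var : 'I_3 -> term3 n
| App : 'I_n -> term3 n -> term3 n -> term3 n -> term3 n.

Fixpoint eval3 (n : nat) (t : term3 n) (x0 x1 x2 : carrier n) : carrier n :=
  match t with
  | Var k => if val k == 0 then x0 else if val k == 1 then x1 else x2
  | App i a b c => top i (eval3 a x0 x1 x2) (eval3 b x0 x1 x2) (eval3 c x0 x1 x2)
  end.

(* Main.v *)
Require Import Defs.
From mathcomp Require Import all_boot.

Lemma xorK1 (u v : 'I_4) : xor4 (xor4 u v) v = u.
Proof. apply/val_inj; move: u v => [[|[|[|[|?]]]] ?] [[|[|[|[|?]]]] ?] //=. Qed.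
Lemma xorK2 (u v : 'I_4) : xor4 (xor4 v u) v = u.
Proof. apply/val_inj; move: u v => [[|[|[|[|?]]]] ?] [[|[|[|[|?]]]] ?] //=. Qed.
Lemma xorK3 (u v : 'I_4) : xor4 (xor4 v v) u = u.
Proof. apply/val_inj; move: u v => [[|[|[|[|?]]]] ?] [[|[|[|[|?]]]] ?] //=. Qed.

Theorem claim5p3 (n : nat) (hn : 2 < n) (hodd : odd n)
  (E : {set carrier n}) (hE : #|E| = n.-1) :
  exists t : term3 n, forall x y, x \in E -> y \in E ->
    [/\ eval3 t y x x = y, eval3 t x y x = y & eval3 t x x y = y].
Proof.
pose S := [set x.1 | x in E].
have hS : #|S| < #|'I_n|.
  rewrite card_ord; apply: (leq_ltn_trans (leq_imset_card _ _)).
  by rewrite hE; case: n hn {hodd E hE S}.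
have : exists i0, i0 \in ~: S.
  apply/set0Pn; apply/eqP => h0.
  by move: hS; rewrite -cardsT -(setCK S) h0 setC0 ltnn.
case=> i0; rewrite in_setC => hi0.
have nE : forall x, x \in E -> (x.1 == i0) = false.
  move=> x xE; apply/negbTE; apply: contra hi0 => /eqP <-.
  by apply/imsetP; exists x.
exists (App i0 (Var _ (@Ordinal 3 0 isT)) (Var _ (@Ordinal 3 1 isT)) (Var _ (@Ordinal 3 2 isT))).
move=> x y xE yE; rewrite /= /top /= (nE x xE) (nE y yE) /=.
rewrite /minority !eqxx xorK1 xorK2 xorK3.
case: x y {xE yE} => a b [c d] /=.
by case: (eqVneq c a) => [->|h]; rewrite ?eqxx // eq_sym (negbTE h) (negbTE h) (eq_sym c a) (negbTE h).
Qed.
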